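(* Assume $C\succ 0$. Let $X\succ 0$ be linearly feasible, i.e. $\mathcal{A}\,\mathrm{vec}(X)=b$, and suppose that $X$ is an equilibrium of the first-ansatz dynamics, i.e. $$v_1(X):=G\mathcal{A}^T(\mathcal{A}G\mathcal{A}^T)^\dagger\mathcal{A}\,\mathrm{vec}(X) - \mathrm{vec}(X) = 0,\qquad G=\tfrac12\bigl(C^{-1}\otimes X + X\otimes C^{-1}\bigr).$$ Then $X$ is an optimal solution of the SDP $\min\{\mathrm{tr}(CX): \mathrm{tr}(A_\ell X)=b_\ell\ \forall\ell\in[m],\ X\succeq 0\}$.
   Context: $C,A_1,\dots,A_m$ are symmetric $n\times n$ matrices and $b\in\mathbb{R}^m$. For an $n\times n$ matrix $M$, $\mathrm{vec}(M)\in\mathbb{R}^{n^2}$ is obtained by stacking the columns of $M$; $\otimes$ is the Kronecker product, with $\mathrm{vec}(ABC)=(C^T\otimes A)\mathrm{vec}(B)$ (so $G\,\mathrm{vec}(C)=\mathrm{vec}(X)$). $\mathcal{A}$ is the $m\times n^2$ matrix whose $\ell$-th row is $\mathrm{vec}(A_\ell)^T$. $\dagger$ is the Moore–Penrose pseudo-inverse. *)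

(* Defs.v *)
From mathcomp Require Import all_boot all_order all_algebra.
From mathcomp Require Import reals.
Set Implicit Arguments. Unset Strict Implicit. Unset Printing Implicit Defensive.
Import Order.TTheory GRing.Theory Num.Theory.
Local Open Scope ring_scope.

Section Defs.
Variable R : realType.

(* Decode an index of 'I_(p*q) into the pair (i, j) with mxvec_index i j = k. *)
Definition mxunindex (p q : nat) (k : 'I_(p * q)) : 'I_p * 'I_q :=
  enum_val (cast_ord (esym (mxvec_cast p q)) k).

(* vec M : column-stacking of M; (vec M) at index mxvec_index j i equals M i j,
   i.e. the entries of column j occupy the j-th block. *)
Definition vec (n : nat) (M : 'M[R]_n) : 'cV[R]_(n * n) := (mxvec M^T)^T.

(* Kronecker product compatible with vec: vec(A B C) = (C^T (x) A) vec(B). *)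
Definition kron (n : nat) (A B : 'M[R]_n) : 'M[R]_(n * n) :=
  \matrix_(p, q) (A (mxunindex p).1 (mxunindex q).1 *
                  B (mxunindex p).2 (mxunindex q).2).

Definition calA (m n : nat) (A : 'I_m -> 'M[R]_n) : 'M[R]_(m, n * n) :=
  \matrix_(l, k) vec (A l) k 0.

Definition symmx (n : nat) (M : 'M[R]_n) : Prop := M^T = M.

Definition psd (n : nat) (M : 'M[R]_n) : Prop :=
  symmx M /\ forall v : 'cV[R]_n, 0 <= (v^T *m M *m v) 0 0.
Definition pd (n : nat) (M : 'M[R]_n) : Prop :=
  symmx M /\ forall v : 'cV[R]_n, v != 0 -> 0 < (v^T *m M *m v) 0 0.

(* P is the Moore-Penrose pseudo-inverse of M (the four Penrose conditions,
   which characterize it uniquely). *)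
Definition is_pinv (p q : nat) (M : 'M[R]_(p, q)) (P : 'M[R]_(q, p)) : Prop :=
  [/\ M *m P *m M = M, P *m M *m P = P,
      (M *m P)^T = M *m P & (P *m M)^T = P *m M].

Definition Gmat (n : nat) (C X : 'M[R]_n) : 'M[R]_(n * n) :=
  2^-1 *: (kron (invmx C) X + kron X (invmx C)).

Definition sdp_feasible (m n : nat) (A : 'I_m -> 'M[R]_n) (b : 'cV[R]_m)
  (Y : 'M[R]_n) : Prop :=
  psd Y /\ forall l : 'I_m, \tr (A l *m Y) = b l 0.

Definition sdp_optimal (m n : nat) (C : 'M[R]_n) (A : 'I_m -> 'M[R]_n)
  (b : 'cV[R]_m) (X : 'M[R]_n) : Prop :=
  sdp_feasible A b X /\
  forall Y : 'M[R]_n, sdp_feasible A b Y -> \tr (C *m X) <= \tr (C *m Y).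

End Defs.

(* Main.v *)
Require Import Defs.
From mathcomp Require Import all_boot all_order all_algebra.
From mathcomp Require Import reals.
From mathcomp Require Import ring lra.
Set Implicit Arguments. Unset Strict Implicit. Unset Printing Implicit Defensive.
Import Order.TTheory GRing.Theory Num.Theory.
Local Open Scope ring_scope.

Section H.
Variable R : realType.
Variable n : nat.
Implicit Types A B M N Q : 'M[R]_n.

Lemma unindexE (i j : 'I_n) : mxunindex (mxvec_index i j) = (i, j).
Proof. by rewrite /mxunindex /mxvec_index cast_ordK enum_rankK. Qed.

Lemma vecE M (i j : 'I_n) : vec M (mxvec_index i j) 0 = M j i.
Proof. by rewrite /vec mxE mxvecE mxE. Qed.

Lemma sum_vec (F : 'I_(n * n) -> R) :
  \sum_k F k = \sum_i \sum_j F (mxvec_index i j).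
Proof.
rewrite pair_bigA /= (reindex (uncurry (@mxvec_index n n))) //=.
  by apply: eq_bigr => -[i j]. 
exact: (@curry_mxvec_bij _ _).
Qed.

Lemma vec_inj M N : vec M = vec N -> M = N.
Proof.
move=> h; apply/matrixP => i j; by rewrite -!vecE h.
Qed.

Lemma kronE A B (i j a b : 'I_n) :
  kron A B (mxvec_index i j) (mxvec_index a b) = A i a * B j b.
Proof. by rewrite /kron mxE !unindexE. Qed.

Lemma kron_vec A B M : kron A B *m vec M = vec (B *m M *m A^T).
Proof.
apply/matrixP => k z; rewrite ord1; case/mxvec_indexP: k => i j.
rewrite vecE !mxE sum_vec.
under eq_bigr => a _ do under eq_bigr => b _ do rewrite kronE vecE.
apply: eq_bigr => a _; rewrite mxE mulr_suml.
by apply: eq_bigr => b _; rewrite ?mxE; ring.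
Qed.


Lemma calAT_vec m (A : 'I_m -> 'M[R]_n) (y : 'cV[R]_m) :
  (calA A)^T *m y = vec (\sum_l y l 0 *: A l).
Proof.
apply/matrixP => k z; rewrite ord1; case/mxvec_indexP: k => i j.
rewrite vecE !mxE summxE; apply: eq_bigr => l _.
by rewrite !mxE mxvecE mxE mulrC.
Qed.

Lemma calA_tr m (A : 'I_m -> 'M[R]_n) X l :
  symmx (A l) -> (calA A *m vec X) l 0 = \tr (A l *m X).
Proof.
move=> hs; rewrite mxE sum_vec /mxtrace.
apply: eq_bigr => i _; rewrite mxE; apply: eq_bigr => j _.
by rewrite !mxE hs !mxvecE mxE.
Qed.


Definition qf (Q : 'M[R]_n) (u v : 'cV[R]_n) := (u^T *m Q *m v) 0 0.

Lemma qfDl Q u1 u2 v : qf Q (u1 + u2) v = qf Q u1 v + qf Q u2 v.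
Proof. by rewrite /qf linearD /= !mulmxDl mxE. Qed.
Lemma qfDr Q u v1 v2 : qf Q u (v1 + v2) = qf Q u v1 + qf Q u v2.
Proof. by rewrite /qf !mulmxDr mxE. Qed.
Lemma qfZl Q t u v : qf Q (t *: u) v = t * qf Q u v.
Proof. by rewrite /qf linearZ /= -!scalemxAl mxE. Qed.
Lemma qfZr Q t u v : qf Q u (t *: v) = t * qf Q u v.
Proof. by rewrite /qf -!scalemxAr mxE. Qed.
Lemma qfQD Q1 Q2 u v : qf (Q1 + Q2) u v = qf Q1 u v + qf Q2 u v.
Proof. by rewrite /qf mulmxDr mulmxDl mxE. Qed.
Lemma qfQZ t Q u v : qf (t *: Q) u v = t * qf Q u v.
Proof. by rewrite /qf -scalemxAr -scalemxAl mxE. Qed.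
Lemma qf_sym Q u v : symmx Q -> qf Q u v = qf Q v u.
Proof.
move=> hs; rewrite /qf.
transitivity ((u^T *m Q *m v)^T 0 0); first by rewrite [RHS]mxE.
by rewrite !trmx_mul trmxK hs mulmxA.
Qed.
Lemma qf_delta Q (i j : 'I_n) : qf Q (delta_mx i 0) (delta_mx j 0) = Q i j.
Proof. by rewrite /qf trmx_delta -rowE -colE !mxE. Qed.
Lemma qf_rank1 Q (e v : 'cV[R]_n) : symmx Q ->
  qf (Q *m e *m (Q *m e)^T) v v = qf Q v e * qf Q e v.
Proof.
move=> hs; rewrite /qf !mulmxA -[v^T *m Q *m e *m (Q *m e)^T *m v]mulmxA.
rewrite trmx_mul hs mulmxA -[_ *m _ *m v]mulmxA.
by rewrite mxE big_ord1.
Qed.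

Lemma psd_col0 Q (k i : 'I_n) : psd Q -> Q k k = 0 -> Q i k = 0.
Proof.
move=> [hs hp] hk; apply/eqP/negPn/negP => hne.
set t := - (Q i i + 1) / (2 * Q i k).
have := hp (delta_mx i 0 + t *: delta_mx k 0).
rewrite -/(qf Q _ _) !(qfDl, qfDr, qfZl, qfZr, qf_delta) hk.
have -> : Q k i = Q i k by rewrite -[in LHS]hs mxE.
rewrite /t; set a := Q i k; set b := Q i i.
rewrite !mulr0 !addr0.
have -> : - (b + 1) / (2 * a) * a = - (b + 1) / 2 by field.
move=> h; lra.
Qed.


Definition elim Q (k : 'I_n) :=
  Q - (Q k k)^-1 *: (Q *m delta_mx k (0 : 'I_1) *m (Q *m delta_mx k (0 : 'I_1))^T).

Lemma elimE Q k i j : elim Q k i j = Q i j - (Q k k)^-1 * (Q i k * Q j k).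
Proof.
rewrite /elim -colE !mxE big_ord1 !mxE.
done.
Qed.

Lemma elim_psd Q k : psd Q -> 0 < Q k k -> psd (elim Q k).
Proof.
move=> [hs hp] ha; split.
  rewrite /symmx /elim linearB /= linearZ /= trmx_mul trmxK hs.
  done.
move=> v; rewrite -/(qf _ v v) /elim.
rewrite qfQD -scaleN1r scalerA qfQZ qf_rank1 //.
set e := delta_mx k 0.
rewrite (qf_sym _ e) //.
set s := qf Q v e.
have := hp (v + (- s / Q k k) *: e).
rewrite -/(qf _ _ _) !(qfDl, qfDr, qfZl, qfZr) /e qf_delta -/e (qf_sym _ e) // -/s.
move=> h; apply: le_trans h _; rewrite le_eqVlt; apply/orP; left; apply/eqP.
have hne : Q k k != 0 by rewrite gt_eqF.
rewrite [qf Q e v](qf_sym _ _ hs) -/s.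
by field.
Qed.


Lemma symE Q i j : symmx Q -> Q j i = Q i j.
Proof. by move=> hs; rewrite -[in LHS]hs mxE. Qed.

Lemma decomp_aux d : forall Q, psd Q ->
  (forall i j : 'I_n, (i < n - d)%N -> Q i j = 0) ->
  exists s : seq (R * 'cV[R]_n), all (fun p => 0 <= p.1) s /\
     Q = \sum_(p <- s) p.1 *: (p.2 *m p.2^T).
Proof.
elim: d => [|d IH] Q hQ hz.
  exists [::]; split => //; rewrite big_nil; apply/matrixP => i j.
  by rewrite mxE; apply: hz; rewrite subn0.
case: (ltnP d n) => hdn; last first.
  apply: IH => // i j hi; exfalso; move: hi; rewrite (_ : n - d = 0)%N //.
  by apply/eqP; rewrite subn_eq0.
have hk : (n - d.+1 < n)%N by rewrite ltn_subrL; apply/andP; split; last by apply: leq_ltn_trans hdn.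
set k := Ordinal hk.
have hsplit : forall i : 'I_n, (i < n - d)%N -> (i < n - d.+1)%N \/ i = k.
  move=> i hi; case: (ltnP i (n - d.+1)) => h; first by left.
  by right; apply/val_inj => /=; apply/eqP; rewrite eqn_leq h andbT; rewrite subnS; rewrite -ltnS prednK //; apply: leq_ltn_trans hi; rewrite leq0n.
case: hQ => hs hp.
case: (eqVneq (Q k k) 0) => hkk.
  apply: (IH Q (conj hs hp)).
  move=> i j /hsplit [hi|->]; first exact: hz.
  by rewrite symE //; apply: psd_col0 hkk.
have ha : 0 < Q k k.
  rewrite lt_def hkk /=; have := hp (delta_mx k 0).
  by rewrite -/(qf _ _ _) qf_delta.
have [s [hs1 hs2]] : exists s : seq (R * 'cV[R]_n), all (fun p => 0 <= p.1) s /\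
     elim Q k = \sum_(p <- s) p.1 *: (p.2 *m p.2^T).
  apply: IH; first by apply: elim_psd.
  move=> i j /hsplit [hi|->]; rewrite elimE.
    by rewrite hz // (hz _ _ hi) mul0r mulr0 subr0.
  by rewrite (symE k j hs) mulrA mulVf // mul1r subrr.
exists (((Q k k)^-1, Q *m delta_mx k 0) :: s); split.
  by rewrite /= hs1 andbT invr_ge0 ltW.
rewrite big_cons /= -hs2 /elim.
by rewrite addrC subrK.
Qed.

Lemma decomp Q : psd Q ->
  exists s : seq (R * 'cV[R]_n), all (fun p => 0 <= p.1) s /\
     Q = \sum_(p <- s) p.1 *: (p.2 *m p.2^T).
Proof. by move=> h; apply: (@decomp_aux n Q h) => i j; rewrite subnn. Qed.


Lemma pd_psd Q : pd Q -> psd Q.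
Proof.
move=> [hs hp]; split => // v; case: (eqVneq v 0) => [->|hv]; last exact: ltW (hp v hv).
by rewrite mulmx0 mxE.
Qed.

Lemma pd_inj Q (v : 'cV[R]_n) : pd Q -> Q *m v = 0 -> v = 0.
Proof.
move=> [hs hp] h; apply/eqP/negPn/negP => hv.
by have := hp v hv; rewrite -mulmxA h mulmx0 mxE ltxx.
Qed.

Lemma pd_unit Q : pd Q -> Q \in unitmx.
Proof.
move=> hQ; rewrite -row_free_unit -kermx_eq0; apply/eqP.
have hK : kermx Q *m Q = 0 by apply/sub_kermxP; exact: submx_refl.
apply/row_matrixP => i; rewrite row0.
have hr : row i (kermx Q) *m Q = 0 by rewrite -row_mul hK row0.
apply: trmx_inj; rewrite linear0; apply: (pd_inj hQ).
by case: hQ => hs _; rewrite -{1}hs -trmx_mul hr linear0.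
Qed.


Lemma inv_sym Q : symmx Q -> symmx (invmx Q).
Proof. by move=> hs; rewrite /symmx trmx_inv hs. Qed.

Lemma qf_inv Q u : pd Q -> qf (invmx Q) u u = qf Q (invmx Q *m u) (invmx Q *m u).
Proof.
move=> hQ; have hU := pd_unit hQ; have hs' := inv_sym (proj1 hQ).
rewrite /qf trmx_mul hs' !mulmxA -[u^T *m invmx Q *m Q]mulmxA mulVmx //.
by rewrite mulmx1.
Qed.

Lemma inv_ge0 Q u : pd Q -> 0 <= qf (invmx Q) u u.
Proof. by move=> hQ; rewrite qf_inv //; case: (pd_psd hQ) => _; apply. Qed.

Lemma inv_eq0 Q u : pd Q -> qf (invmx Q) u u = 0 -> u = 0.
Proof.
move=> hQ; rewrite qf_inv // => h.
have h1 : invmx Q *m u = 0.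
  apply/eqP/negPn/negP => hv; case: hQ h => _ hp h.
  by have := hp _ hv; rewrite -/(qf _ _ _) h ltxx.
by rewrite -[u](mulKVmx (pd_unit hQ)) h1 mulmx0.
Qed.

Lemma vecD M N : vec (M + N) = vec M + vec N.
Proof. by rewrite /vec !linearD. Qed.
Lemma vecZ t M : vec (t *: M) = t *: vec M.
Proof. by rewrite /vec !linearZ. Qed.

Lemma seq_psum (T : eqType) (s : seq T) (f : T -> R) :
  (forall x, x \in s -> 0 <= f x) -> \sum_(x <- s) f x = 0 ->
  forall x, x \in s -> f x = 0.
Proof.
elim: s => [|a s IH] hf hs x //; rewrite big_cons in hs.
have ha := hf a (mem_head _ _).
have hs0 : 0 <= \sum_(y <- s) f y.
  rewrite big_seq; apply: sumr_ge0 => y hy; apply: hf.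
  by rewrite in_cons hy orbT.
move/eqP: hs; rewrite paddr_eq0 // => /andP [/eqP h1 /eqP h2].
rewrite in_cons => /orP [/eqP ->|hx] //.
apply: IH => // y hy; apply: hf; by rewrite in_cons hy orbT.
Qed.

End H.

Unset Implicit Arguments.

Theorem lemma4p4 (R : realType) (m n : nat)
  (C : 'M[R]_n) (A : 'I_m -> 'M[R]_n) (b : 'cV[R]_m) (X : 'M[R]_n)
  (P : 'M[R]_m) :
  symmx C -> (forall l, symmx (A l)) ->
  pd C -> pd X ->
  calA A *m vec X = b ->
  is_pinv (calA A *m Gmat C X *m (calA A)^T) P ->
  Gmat C X *m (calA A)^T *m P *m calA A *m vec X - vec X = 0 ->
  sdp_optimal C A b X.
Proof.
move=> hC hA hCpd hXpd hb hP heq.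
have hCu := pd_unit hCpd; have hXu := pd_unit hXpd.
have hXs : symmx X := proj1 hXpd.
have hCis : symmx (invmx C) := inv_sym hC.
set Ci := invmx C in hCis *.
set y := P *m calA A *m vec X.
set S := \sum_l y l 0 *: A l.
have hS : symmx S.
  by rewrite /symmx /S linear_sum; apply: eq_bigr => l _; rewrite linearZ /= hA.
have h1 : Gmat C X *m vec S = vec X.
  have hAy : (calA A)^T *m y = vec S by exact: calAT_vec.
  have heq' : Gmat C X *m (calA A)^T *m P *m calA A *m vec X = vec X.
    by apply/eqP; rewrite -subr_eq0 heq.
  by rewrite -hAy /y !mulmxA.
have h2 : X = 2^-1 *: (X *m S *m Ci + Ci *m S *m X).
  apply: vec_inj; rewrite -[in LHS]h1 /Gmat -scalemxAl mulmxDl !kron_vec vecZ vecD.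
  by rewrite hXs hCis.
set Z := C - S.
have hZs : symmx Z by rewrite /symmx linearB /= hC hS.
have hE : X *m Z *m Ci + Ci *m Z *m X = 0.
  have hU : X *m S *m Ci + Ci *m S *m X = 2%:R *: X.
    by rewrite {3}h2 scalerA mulfV ?scale1r // pnatr_eq0.
  rewrite /Z !mulmxBr !mulmxBl /Ci -[X *m C *m invmx C]mulmxA mulmxV // mulmx1.
  rewrite -/Ci mulVmx // mul1mx addrACA -opprD hU scaler_nat mulr2n subrr.
  done.
have hT : \tr (X *m (Z *m Ci *m Z)) = 0.
  have : \tr ((X *m Z *m Ci + Ci *m Z *m X) *m Z) = 0 by rewrite hE mul0mx linear0.
  rewrite mulmxDl mxtraceD !mulmxA => h.
  have := mxtrace_mulC (X *m Z) (Ci *m Z); rewrite !mulmxA => e.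
  rewrite e in h *; lra.
set T := Z *m Ci *m Z in hT.
have hTq : forall w, qf T w w = qf Ci (Z *m w) (Z *m w).
  by move=> w; rewrite /qf /T trmx_mul hZs !mulmxA.
have [s [hs1 hs2]] := decomp (pd_psd hXpd).
have hsum : \sum_(p <- s) p.1 * qf T p.2 p.2 = 0.
  rewrite -[RHS]hT {1}hs2 mulmx_suml linear_sum; apply: eq_bigr => p _.
  rewrite -scalemxAl linearZ /=; congr (_ * _).
  by rewrite -mulmxA mxtrace_mulC trace_mx11 /qf mulmxA.
have hZw : forall p, p \in s -> p.1 *: (Z *m p.2 *m p.2^T) = 0.
  have hnn : forall x, x \in s -> 0 <= x.1 * qf T x.2 x.2.
    move=> x hx; apply: mulr_ge0; first by move/allP: hs1 => /(_ x hx).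
    by rewrite hTq; apply: inv_ge0.
  move=> p hp; have := seq_psum hnn hsum hp => /=.
  move/eqP; rewrite mulf_eq0 => /orP [/eqP ->|/eqP h]; first by rewrite scale0r.
  rewrite hTq in h; by rewrite (inv_eq0 hCpd h) mul0mx scaler0.
have hZX : Z *m X = 0.
  rewrite hs2 mulmx_sumr big_seq big1 // => p hp; rewrite -scalemxAr mulmxA; exact: hZw.
have hZ : Z = 0 by rewrite -(mulmxK hXu Z) hZX mul0mx.
have hCS : C = S by apply/eqP; rewrite -subr_eq0; apply/eqP.
have htr : forall Y, (forall l, \tr (A l *m Y) = b l 0) ->
    \tr (C *m Y) = \sum_l y l 0 * b l 0.
  move=> Y hY; rewrite hCS /S mulmx_suml linear_sum; apply: eq_bigr => l _.
  by rewrite -scalemxAl linearZ /= hY.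
have hXf : forall l, \tr (A l *m X) = b l 0.
  by move=> l; rewrite -hb calA_tr //; exact: hA.
split; first by split => //; exact: pd_psd.
by move=> Y [_ hY]; rewrite (htr _ hXf) (htr _ hY).
Qed.
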